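(* Let $\epsilon>0$. If $A=(a_n)_{n\ge1}$ is a monotonically increasing sequence of positive integers which is $\epsilon$-complete, then there is a constant $C$ such that $a_n\le\sum_{i\le\epsilon n+C}a_i$ for all positive integers $n$.
   Context: For a sequence $A$ of positive integers, $\Sigma(A)$ is the set of sums of distinct terms of $A$; $A$ is complete if every sufficiently large positive integer lies in $\Sigma(A)$. $A$ is $\epsilon$-complete if every subsequence $A'$ of $A$ with $|A'\cap[n]|\ge\epsilon|A\cap[n]|$ for all sufficiently large $n$ is complete. *)

(* Defs.v *)
From Stdlib Require Import Reals.
From mathcomp Require Import all_boot.

Set Implicit Arguments.
Unset Strict Implicit.
Unset Printing Implicit Defensive.

(* A sequence A = (a_n)_{n>=1} is a function a : nat -> nat; the value a 0 is
   irrelevant (never used).  A subsequence A' of A is given by a set of indices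
   I : nat -> bool (classically every subset of nat is such a predicate). *)

Definition incr_pos_seq (a : nat -> nat) : Prop :=
  (forall n, 1 <= n -> 0 < a n) /\ (forall n, 1 <= n -> a n < a n.+1).

(* For an increasing
   sequence of positive integers a_i >= i, so only indices i <= n can
   contribute, and the count over 1 <= i <= n is exact. *)
Definition count_le (I : nat -> bool) (a : nat -> nat) (n : nat) : nat :=
  \sum_(1 <= i < n.+1 | I i && (a i <= n)) 1.

Definition in_subset_sums (I : nat -> bool) (a : nat -> nat) (m : nat) : Prop :=
  exists s : seq nat, uniq s /\ all (fun i => (1 <= i) && I i) s /\
                      m = \sum_(i <- s) a i.

Definition complete_sub (I : nat -> bool) (a : nat -> nat) : Prop :=
  exists N, forall m, N <= m -> 0 < m -> in_subset_sums I a m.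

Definition eps_complete (eps : R) (a : nat -> nat) : Prop :=
  forall I : nat -> bool,
    (exists N, forall n, N <= n ->
        Rle (Rmult eps (INR (count_le predT a n))) (INR (count_le I a n))) ->
    complete_sub I a.

Definition Rleb (x y : R) : bool := if Rle_dec x y then true else false.

(* \sum_{1 <= i <= x} a_i  (i ranging over positive integers with i <= x);
   the range bound Z.to_nat (up x) exceeds every integer i <= x. *)
Definition sum_upto (a : nat -> nat) (x : R) : nat :=
  \sum_(1 <= i < (Z.to_nat (up x)).+1 | Rleb (INR i) x) a i.

(* Main.v *)
Require Import Defs.
From Stdlib Require Import Reals.
From mathcomp Require Import all_boot.
From Stdlib Require Import ZArith Lra Lia ClassicalEpsilon Classical.
From mathcomp Require Import zify.
Delimit Scope R_scope with Re.
Set Implicit Arguments.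

Lemma INRD m n : INR (m + n) = (INR m + INR n)%Re.
Proof. exact: plus_INR. Qed.

Lemma incr_le a : incr_pos_seq a -> forall i j, 1 <= i -> i <= j -> a i <= a j.
Proof.
move=> [_ H] i j Hi; elim: j => [|j IH] Hij; first by lia.
move: Hij; rewrite leq_eqVlt => /orP [/eqP <- // | Hij].
rewrite ltnS in Hij.
have := H j (leq_trans Hi Hij). have := IH Hij. lia.
Qed.

Lemma sum_upto_ge a x u : (INR u <= x)%Re -> \sum_(1 <= i < u.+1) a i <= sum_upto a x.
Proof.
move=> Hu. rewrite /sum_upto.
have [H1 _] := archimed x.
have Hlt : (Z.of_nat u < up x)%Z.
{ apply: lt_IZR. rewrite -INR_IZR_INZ. lra. }
have HM : u.+1 <= (Z.to_nat (up x)).+1 by lia.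
rewrite [X in _ <= X](@big_cat_nat _ _ _ u.+1) //=.
idtac.
apply: (leq_trans _ (leq_addr _ _)).
rewrite [X in _ <= X]big_mkcond /=; apply/eq_leq/eq_big_nat => i /andP[_ Hi].
rewrite /Rleb; case: Rle_dec => // n; exfalso; apply: n.
apply: Rle_trans Hu; apply: le_INR; lia.
Qed.

Lemma sum_sub_range (a : nat -> nat) (s : seq nat) lo hi :
  uniq s -> (forall x, x \in s -> lo <= x < hi) ->
  \sum_(i <- s) a i <= \sum_(lo <= i < hi) a i.
Proof.
move=> Hu Hs.
have Hp : perm_eq s [seq i <- index_iota lo hi | i \in s].
{ apply: uniq_perm => //; first by rewrite filter_uniq // iota_uniq.
  move=> x; rewrite mem_filter mem_index_iota.
  by case Hx: (x \in s) => //=; rewrite Hs. }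
rewrite (perm_big _ Hp) big_filter.
by rewrite [X in _ <= X](bigID (mem s)) /= leq_addr.
Qed.

Lemma incr_pos a n : incr_pos_seq a -> 1 <= n -> 0 < a n.
Proof. by case=> H _; apply: H. Qed.

Theorem theorem4p1 (eps : R) (a : nat -> nat) :
  Rlt 0 eps ->
  incr_pos_seq a ->
  eps_complete eps a ->
  exists C : R, forall n : nat, 1 <= n -> a n <= sum_upto a (Rplus (Rmult eps (INR n)) C).
Proof.
move=> He Ha Hc.
have mono := incr_le Ha.
case: (Rle_dec 1 eps) => He1.
{ exists 0%Re => n Hn. apply: (leq_trans _ (@sum_upto_ge a _ n _)).
  - rewrite big_nat_recr //=. apply: leq_addl.
  - have := pos_INR n. nra. }
apply: NNPP => Hno.
have Hg : forall c : nat, exists n, 1 <= n /\ sum_upto a (eps * INR n + INR c) < a n.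
{ move=> c. apply: NNPP => H. apply: Hno. exists (INR c) => n Hn.
  rewrite leqNgt; apply/negP => Hlt. apply: H. by exists n. }
pose g c := proj1_sig (constructive_indefinite_description _ (Hg c)).
have Hg1 c : 1 <= g c /\ sum_upto a (eps * INR (g c) + INR c) < a (g c)
  := proj2_sig (constructive_indefinite_description _ (Hg c)).
pose p := fix p j := if j is j'.+1 then g (p j' + j' + 2) else 0.
have pS j : p j.+1 = g (p j + j + 2) by [].
pose q n := Z.to_nat (up (eps * INR n)).
have hq n : (eps * INR n <= INR (q n) <= eps * INR n + 1)%Re.
{ have [H1 H2] := archimed (eps * INR n).
  have H0 : (0 <= eps * INR n)%Re by have := pos_INR n; nra.
  have Hp : (0 < up (eps * INR n))%Z by apply: lt_IZR; lra.
  have -> : INR (q n) = IZR (up (eps * INR n)).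
  { rewrite /q [INR (Z.to_nat _)]INR_IZR_INZ Z2Nat.id //. lia. }
  lra. }
pose u j := p j + j + 1 + q (p j.+1).
have uE j : u j = p j + j + 1 + q (p j.+1) by [].
pose I i := (1 <= i) && ~~ has (fun j => (u j <= i) && (i < p j.+1)) (iota 0 i).
have hkey j : \sum_(1 <= i < (u j).+1) a i < a (p j.+1).
{ have [_ H] := Hg1 (p j + j + 2). rewrite -pS in H.
  apply: leq_ltn_trans H. apply: sum_upto_ge.
  rewrite uE !INRD /=. have := hq (p j.+1). rewrite pS. lra. }
have hmono j : p j < p j.+1.
{ rewrite ltnNge; apply/negP => Hle.
  have [H1 _] := Hg1 (p j + j + 2). rewrite -pS in H1.
  have := hkey j.
  have : a (u j) <= \sum_(1 <= i < (u j).+1) a i.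
  { rewrite big_nat_recr /=; [exact: leq_addl | rewrite uE; lia]. }
  have : a (p j.+1) <= a (u j) by apply: mono => //; rewrite uE; lia.
  lia. }
have hmono2 k j : k < j -> p k.+1 <= p j.
{ elim: j => [//|j IH]; rewrite ltnS leq_eqVlt => /orP [/eqP->//|/IH].
  have := hmono j; lia. }
have hI_in i : 1 <= i -> (forall j, ~~ ((u j <= i) && (i < p j.+1))) -> I i.
{ move=> Hi H; rewrite /I Hi /=; apply/hasPn => j _; apply: H. }
have hI_out i : 1 <= i -> ~~ I i -> exists j, (u j <= i) && (i < p j.+1).
{ move=> Hi; rewrite /I Hi /= negbK => /hasP [j _ Hj]; by exists j. }
have hI_gap i j : I i -> ~~ ((u j <= i) && (i < p j.+1)).
{ rewrite /I => /andP [_ /hasPn H].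
  case: (boolP (u j <= i)) => Hu //=. move: (H j). rewrite mem_iota /=.
  have Hj : j < i by move: Hu; rewrite uE; lia.
  rewrite add0n Hj /=. by move=> /(_ isT); rewrite Hu. }
have D t : (eps * INR t <= INR (\sum_(1 <= i < t.+1 | I i) 1))%Re.
{ elim: t => [|t IH]; first by rewrite big_geq //=; lra.
  rewrite big_mkcond big_nat_recr // -big_mkcond. case HI: (I t.+1).
  - rewrite INRD S_INR Rmult_plus_distr_l Rmult_1_r /=; lra.
  - rewrite Monoid.mulm1 -[X in (_ <= INR X)%Re]/(\sum_(1 <= i < t.+1 | I i) 1).
    have [j /andP [Hu Hp]] := hI_out t.+1 isT (negbT HI).
    have Hmid : \sum_(p j + 1 <= i < u j | I i) 1 = u j - (p j + 1).
    { rewrite big_mkcond /= -[RHS]muln1 -sum_nat_const_nat.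
      apply: eq_big_nat => i /andP [Hi1 Hi2]. rewrite hI_in //; first lia.
      move=> k; case: (ltngtP k j) => Hkj.
      - have := hmono2 _ _ Hkj. lia.
      - have := hmono2 _ _ Hkj. move: Hu Hi2; rewrite !uE. lia.
      - subst k. lia. }
    have Hge : u j - (p j + 1) <= \sum_(1 <= i < t.+1 | I i) 1.
    { have h1 : p j + 1 <= t.+1 by move: Hu; rewrite uE; lia.
      have h2 : p j + 1 <= u j by rewrite uE; lia.
      have h3 : u j <= t.+1 by [].
      rewrite -Hmid (@big_cat_nat _ _ _ (p j + 1) 1 t.+1) //.
      rewrite (@big_cat_nat _ _ _ (u j) (p j + 1) t.+1) //.
      apply: (leq_trans (leq_addr (\sum_(u j <= i < t.+1 | I i) 1) _)). exact: leq_addl.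
      lia. }
    have Hq : q (p j.+1) <= u j - (p j + 1) by rewrite uE; lia.
    have := le_INR _ _ (leP (leq_trans Hq Hge)).
    have := hq (p j.+1).
    have := le_INR _ _ (leP (ltnW Hp)).
    nra. }
have hcount (P : pred nat) :
  (forall i k, 1 <= i -> i <= k -> P k -> P i) -> forall r,
  (eps * INR (\sum_(1 <= i < r.+1 | P i) 1) <= INR (\sum_(1 <= i < r.+1 | I i && P i) 1))%Re.
{ move=> Hdc; elim=> [|r IH]; first by rewrite !big_geq //=; lra.
  case HP: (P r.+1).
  - have E1 : \sum_(1 <= i < r.+2 | P i) 1 = r.+1.
    { rewrite big_mkcond /=.
      rewrite (eq_big_nat _ _ (F2 := fun _ => 1)) ?sum_nat_const_nat; first lia.
      move=> i /andP [Hi1 Hi2]. by rewrite (Hdc i r.+1).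
    }
    have E2 : \sum_(1 <= i < r.+2 | I i && P i) 1 = \sum_(1 <= i < r.+2 | I i) 1.
    { rewrite big_mkcond [RHS]big_mkcond /=. apply: eq_big_nat => i /andP [Hi1 Hi2].
      by rewrite (Hdc i r.+1) ?andbT. }
    rewrite E1 E2. exact: D.
  - rewrite big_mkcond [X in (_ <= INR X)%Re]big_mkcond [X in (eps * INR X)%Re]big_nat_recr // [X in (_ <= INR X)%Re]big_nat_recr // HP andbF !Monoid.mulm1 -!big_mkcond. exact: IH. }
have Hcomp : complete_sub I a.
{ apply: Hc. exists 0 => m _. rewrite /count_le.
  apply: (hcount (fun i => a i <= m)) => i k Hi Hik Hk.
  exact: leq_trans (mono _ _ Hi Hik) Hk. }
case: Hcomp => N HN.
have hk := hkey N.
have HU1 : 1 <= u N by rewrite uE; lia.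
rewrite big_nat_recr // in hk.
have HaU := @incr_pos a (u N) Ha HU1.
have HS : u N - 1 <= \sum_(1 <= i < u N) a i.
{ rewrite -[u N - 1]muln1 -sum_nat_const_nat big_nat_cond [X in _ <= X]big_nat_cond.
  apply: leq_sum => i /andP [/andP [Hi _] _]. exact: @incr_pos a i Ha Hi. }
have HUN : N <= u N - 1 by rewrite uE; lia.
have Hn1 : 1 <= p N.+1 by have := hmono N; lia.
have hk' : \sum_(1 <= i < u N) a i + a (u N) < a (p N.+1) by [].
have [s [Hsu [Hsa Hsum]]] := HN (a (p N.+1) - 1) ltac:(lia) ltac:(lia).
have Hs : forall x, x \in s -> 1 <= x < u N.
{ move=> x Hx. move/allP: Hsa => /(_ x Hx) /andP [Hx1 HIx].
  have Hax : a x <= \sum_(i <- s) a i by rewrite (bigD1_seq x) //= leq_addr.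
  rewrite Hx1 /=. rewrite ltnNge; apply/negP => HUx.
  have := hI_gap x N HIx. rewrite HUx /= -leqNgt => Hnx.
  have := mono _ _ Hn1 Hnx. lia. }
have := @sum_sub_range a s 1 (u N) Hsu Hs. lia.
Qed.
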